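(* Let $n=2k+1$ be odd with $k\ge1$, $\theta=\frac{2\pi}{n+2}$, and for $L>0$ let $\mathcal{N}^{(L)}=\{(\ell_j,r_j): j\in[1:n]\}$ be given by $\ell_1=1$, $r_1=L$, and $$\ell_{2i}=\ell_{2i+1}=\frac{\sin(i\theta)+\sin((i+1)\theta)}{\sin((i+1)\theta)},\qquad r_{2i}=r_{2i+1}=\frac{\sin(i\theta)+\sin((i+1)\theta)}{\sin(i\theta)},\qquad i\in[1:k].$$ Then $\mathsf{C}_1(\mathcal{N}_j)=1$ for all $j\in[2:n]$, $\mathsf{C}_1(\mathcal{N}^{(L)})=1$ for every $L>0$, $\mathsf{C}_n(\mathcal{N}^{(L)})\le\ell_n=2+2\cos\theta$ for every $L>0$, and $\lim_{L\to\infty}\mathsf{C}_n(\mathcal{N}^{(L)})=2+2\cos\theta$. Hence $\lim_{L\to\infty}\frac{\mathsf{C}_1(\mathcal{N}^{(L)})}{\mathsf{C}_n(\mathcal{N}^{(L)})}=\frac{1}{2+2\cos\left(\frac{2\pi}{n+2}\right)}$.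
   Context: For a network $\mathcal{N}=\{(\ell_i,r_i): i\in[1:n]\}$ with nonnegative link capacities, with complements inside $[1:n]$ and maxima over empty sets equal to $0$, the approximate capacity is $\mathsf{C}_n(\mathcal{N})=\max_{\boldsymbol\lambda}\min_{\Omega\subseteq[1:n]}\sum_{\mathcal{S}\subseteq[1:n]}\lambda_{\mathcal{S}}\big(\max_{i\in\mathcal{S}^c\cap\Omega^c}\ell_i+\max_{i\in\mathcal{S}\cap\Omega}r_i\big)$, the maximum being over schedules $\boldsymbol\lambda=(\lambda_{\mathcal{S}})_{\mathcal{S}\subseteq[1:n]}$, $\lambda_{\mathcal{S}}\ge0$, $\sum_{\mathcal{S}}\lambda_{\mathcal{S}}=1$. $\mathsf{C}_1(\mathcal{N}_i)=\frac{\ell_ir_i}{\ell_i+r_i}$ and $\mathsf{C}_1(\mathcal{N})=\max_i\mathsf{C}_1(\mathcal{N}_i)$. *)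

(* Defs.v *)
From Stdlib Require Import Reals List Arith.
Import ListNotations.
Open Scope R_scope.

(* A network with n links is given by link capacities l, r : nat -> R,
   where link j (j in [1:n]) has capacities (l j, r j).
   A subset of [1:n] is encoded as a list of n booleans: the (j-1)-th
   entry (0-based) says whether link j belongs to the subset. *)

Fixpoint all_subsets (n : nat) : list (list bool) :=
  match n with
  | O => [ [] ]
  | S m => map (cons true) (all_subsets m) ++ map (cons false) (all_subsets m)
  end.

(* max_{i in [1:n], sel (i-1) = true} f i, with max over the empty set = 0.
   (Capacities are nonnegative, so starting the fold at 0 is exact.) *)
Fixpoint max_sel_aux (sel : list bool) (f : nat -> R) (j : nat) : R :=
  match sel with
  | [] => 0
  | b :: sel' =>
      let rest := max_sel_aux sel' f (S j) in
      if b then Rmax (f j) rest else rest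
  end.
Definition max_sel (sel : list bool) (f : nat -> R) : R := max_sel_aux sel f 1.

Definition sel_and (a b : list bool) : list bool := map (fun p => andb (fst p) (snd p)) (combine a b).
Definition sel_compl (a : list bool) : list bool := map negb a.

(* Minimum of a (nonempty) list of reals; 0 on the empty list (never used). *)
Definition Rmin_list (xs : list R) : R :=
  match xs with [] => 0 | x :: xs' => fold_right Rmin x xs' end.

Definition Rsum_list (xs : list R) : R := fold_right Rplus 0 xs.

Definition schedule (n : nat) (lam : list bool -> R) : Prop :=
  (forall S, In S (all_subsets n) -> 0 <= lam S) /\
  Rsum_list (map lam (all_subsets n)) = 1.

Definition cut_value (n : nat) (l r : nat -> R) (lam : list bool -> R)
  (Om : list bool) : R :=
  Rsum_list (map (fun S =>
     lam S * (max_sel (sel_and (sel_compl S) (sel_compl Om)) l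
              + max_sel (sel_and S Om) r)) (all_subsets n)).

Definition sched_value (n : nat) (l r : nat -> R) (lam : list bool -> R) : R :=
  Rmin_list (map (cut_value n l r lam) (all_subsets n)).

Definition is_Cn (n : nat) (l r : nat -> R) (c : R) : Prop :=
  (exists lam, schedule n lam /\ sched_value n l r lam = c) /\
  (forall lam, schedule n lam -> sched_value n l r lam <= c).

Definition C1_link (l r : R) : R := l * r / (l + r).

Fixpoint C1_aux (m : nat) (l r : nat -> R) : R :=
  match m with
  | O => 0
  | S O => C1_link (l 1%nat) (r 1%nat)
  | S m' => Rmax (C1_link (l m) (r m)) (C1_aux m' l r)
  end.
Definition C1net (n : nat) (l r : nat -> R) : R := C1_aux n l r.

Definition theta_of (k : nat) : R := 2 * PI / INR (2 * k + 3).

Definition ellL (k : nat) (L : R) (j : nat) : R :=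
  match j with
  | 1%nat => 1
  | _ => let i := INR (Nat.div2 j) in
         (sin (i * theta_of k) + sin ((i + 1) * theta_of k)) / sin ((i + 1) * theta_of k)
  end.

Definition rL (k : nat) (L : R) (j : nat) : R :=
  match j with
  | 1%nat => L
  | _ => let i := INR (Nat.div2 j) in
         (sin (i * theta_of k) + sin ((i + 1) * theta_of k)) / sin (i * theta_of k)
  end.

(* Main.v *)
Require Import Defs.
From Stdlib Require Import Reals List Arith Lra Lia Bool ClassicalEpsilon FunctionalExtensionality.
Import ListNotations.
Open Scope R_scope.

Lemma Rsum_cons x xs : Rsum_list (x :: xs) = x + Rsum_list xs.
Proof. reflexivity. Qed.

Lemma Rsum_scale {A} (l : list A) (f : A -> R) k :
  Rsum_list (map (fun x => k * f x) l) = k * Rsum_list (map f l).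
Proof. induction l; simpl; [ring|]. rewrite IHl; ring. Qed.

Lemma Rsum_plus {A} (l : list A) (f g : A -> R) :
  Rsum_list (map (fun x => f x + g x) l) = Rsum_list (map f l) + Rsum_list (map g l).
Proof. induction l; simpl; [ring|]. rewrite IHl; ring. Qed.

Lemma Rsum_ext {A} (l : list A) (f g : A -> R) :
  (forall x, In x l -> f x = g x) -> Rsum_list (map f l) = Rsum_list (map g l).
Proof. intros H; f_equal; apply map_ext_in; auto. Qed.

Lemma Rsum_nonneg {A} (l : list A) (f : A -> R) :
  (forall x, In x l -> 0 <= f x) -> 0 <= Rsum_list (map f l).
Proof. induction l; simpl; intros H; [lra|].
  assert (0 <= f a) by auto. assert (0 <= Rsum_list (map f l)) by auto. lra. Qed.

Lemma Rsum_le {A} (l : list A) (f g : A -> R) :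
  (forall x, In x l -> f x <= g x) -> Rsum_list (map f l) <= Rsum_list (map g l).
Proof. induction l; simpl; intros H; [lra|].
  assert (f a <= g a) by auto. assert (Rsum_list (map f l) <= Rsum_list (map g l)) by auto. lra. Qed.

Lemma In_le_Rsum {A} (l : list A) (f : A -> R) x :
  (forall y, In y l -> 0 <= f y) -> In x l -> f x <= Rsum_list (map f l).
Proof. induction l; simpl; intros H Hx; [contradiction|].
  destruct Hx as [<-|Hx].
  - assert (0 <= Rsum_list (map f l)) by (apply Rsum_nonneg; auto). lra.
  - assert (0 <= f a) by auto. assert (f x <= Rsum_list (map f l)) by auto. lra. Qed.

Lemma Rsum_zero_each {A} (l : list A) (f : A -> R) :
  (forall x, In x l -> 0 <= f x) -> Rsum_list (map f l) = 0 -> forall x, In x l -> f x = 0.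
Proof. intros H Hs x Hx.
  assert (f x <= 0) by (rewrite <- Hs; apply In_le_Rsum; auto).
  assert (0 <= f x) by auto. lra. Qed.

Lemma Rabs_Rsum_le {A} (l : list A) (mu c : A -> R) :
  (forall x, In x l -> 0 <= mu x <= 1) ->
  Rabs (Rsum_list (map (fun x => mu x * c x) l)) <= Rsum_list (map (fun x => Rabs (c x)) l).
Proof. induction l; simpl; intros H.
  - rewrite Rabs_R0; lra.
  - eapply Rle_trans; [apply Rabs_triang|].
    assert (Rabs (mu a * c a) <= Rabs (c a)).
    { rewrite Rabs_mult. assert (h:=H a (or_introl eq_refl)).
      rewrite (Rabs_right (mu a)) by lra.
      assert (0 <= Rabs (c a)) by apply Rabs_pos. nra. }
    assert (Rabs (Rsum_list (map (fun x => mu x * c x) l)) <= Rsum_list (map (fun x => Rabs (c x)) l)) by auto.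
    lra. Qed.

Lemma Rmin_list_le (xs : list R) x : In x xs -> Rmin_list xs <= x.
Proof.
  destruct xs as [|y ys]; simpl; [tauto|].
  revert x; induction ys as [|z zs IH]; simpl; intros x Hx.
  - destruct Hx as [->|[]]; lra.
  - destruct Hx as [->|[->|Hx]].
    + assert (fold_right Rmin x zs <= x) by (apply IH; auto). unfold Rmin at 1; destruct Rle_dec; lra.
    + apply Rmin_l.
    + assert (fold_right Rmin y zs <= x) by (apply IH; auto). unfold Rmin at 1; destruct Rle_dec; lra.
Qed.

Lemma Rmin_list_ge (xs : list R) b : xs <> [] -> (forall x, In x xs -> b <= x) -> b <= Rmin_list xs.
Proof.
  destruct xs as [|y ys]; simpl; [tauto|]. intros _ H.
  induction ys as [|z zs IH]; simpl in *.
  - auto.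
  - apply Rmin_glb; auto. apply IH. intros x [->|Hx]; auto.
Qed.

Lemma Rmin_list_in (xs : list R) : xs <> [] -> In (Rmin_list xs) xs.
Proof.
  destruct xs as [|y ys]; simpl; [tauto|]. intros _.
  induction ys as [|z zs IH]; simpl in *; auto.
  unfold Rmin; destruct Rle_dec; auto. destruct IH; auto.
Qed.

Lemma Rmin_list_lip {B} (Bs : list B) (f g : B -> R) e :
  Bs <> [] ->
  (forall b, In b Bs -> Rabs (f b - g b) <= e) ->
  Rmin_list (map f Bs) <= Rmin_list (map g Bs) + e.
Proof.
  intros Hne H.
  assert (Hin : In (Rmin_list (map g Bs)) (map g Bs)).
  { apply Rmin_list_in. destruct Bs; simpl; congruence. }
  apply in_map_iff in Hin. destruct Hin as [b [Hb Hb2]]. rewrite <- Hb.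
  assert (Rmin_list (map f Bs) <= f b) by (apply Rmin_list_le; apply in_map; auto).
  assert (h := H b Hb2). revert h; unfold Rabs; destruct Rcase_abs; lra.
Qed.

Definition Fsum {A} (l : list A) (lam : A -> R) (c : A -> R) :=
  Rsum_list (map (fun a => lam a * c a) l).
Definition Fval {A B} (l : list A) (Bs : list B) (d : B -> R) (c : B -> A -> R) (lam : A -> R) :=
  Rmin_list (map (fun b => d b + Fsum l lam (c b)) Bs).
Definition dom {A} (l : list A) (lam : A -> R) :=
  (forall a, In a l -> 0 <= lam a) /\ Rsum_list (map lam l) = 1.

Lemma dom_le1 {A} (l : list A) lam x : dom l lam -> In x l -> 0 <= lam x <= 1.
Proof. intros [H1 H2] Hx. split; auto. rewrite <- H2. apply In_le_Rsum; auto. Qed.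

Lemma lip_cont (h : R -> R) K : 0 <= K -> (forall t s, Rabs (h t - h s) <= K * Rabs (t - s)) ->
  forall x, continuity_pt h x.
Proof.
  intros HK H x. unfold continuity_pt, continue_in, limit1_in, limit_in. intros eps Heps.
  exists (eps / (K + 1)). split.
  - apply Rdiv_lt_0_compat; lra.
  - intros y [_ Hy]. simpl in *. unfold Rdist in *.
    eapply Rle_lt_trans; [apply H|].
    assert (0 <= Rabs (y - x)) by apply Rabs_pos.
    apply Rlt_le_trans with (K * (eps / (K+1)) + eps/(K+1)).
    + assert (K * Rabs (y - x) <= K * (eps / (K + 1))) by (apply Rmult_le_compat_l; lra).
      assert (0 < eps / (K+1)) by (apply Rdiv_lt_0_compat; lra). lra.
    + replace (K * (eps / (K + 1)) + eps / (K + 1)) with eps by (field; lra). lra.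
Qed.

Lemma opt_exists {A B} (eqA : forall x y : A, {x = y} + {x <> y}) (l : list A) :
  l <> [] -> NoDup l -> forall (Bs : list B) (d : B -> R) (c : B -> A -> R),
  Bs <> [] ->
  exists lst, dom l lst /\ forall lam, dom l lam -> Fval l Bs d c lam <= Fval l Bs d c lst.
Proof.
  induction l as [|a l' IH]; [tauto|]. intros _ Hnd Bs d c HBs.
  apply NoDup_cons_iff in Hnd. destruct Hnd as [Hna Hnd].
  destruct l' as [|a1 l1].
  - exists (fun _ => 1). split.
    + split; [intros; lra| simpl; lra].
    + intros lam [H1 H2]. simpl in H2. unfold Fval, Fsum. simpl.
      replace (lam a) with 1 by lra. lra.
  - set (l' := a1 :: l1) in *.
    assert (Hl' : l' <> []) by discriminate.
    clearbody l'.
    set (dt := fun (t : R) b => d b + t * c b a).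
    set (ct := fun (t : R) b x => (1 - t) * c b x).
    assert (Hex : forall t, exists mu, dom l' mu /\ forall lam, dom l' lam ->
                   Fval l' Bs (dt t) (ct t) lam <= Fval l' Bs (dt t) (ct t) mu).
    { intros t. apply IH; auto. }
    set (mu := fun t => proj1_sig (constructive_indefinite_description _ (Hex t))).
    assert (Hmu : forall t, dom l' (mu t) /\ forall lam, dom l' lam ->
                   Fval l' Bs (dt t) (ct t) lam <= Fval l' Bs (dt t) (ct t) (mu t)).
    { intros t. unfold mu. destruct constructive_indefinite_description; auto. }
    set (h := fun t => Fval l' Bs (dt t) (ct t) (mu t)).
    assert (Key : forall lam t nu, lam a = t -> (forall x, In x l' -> lam x = (1 - t) * nu x) ->
               Fval (a :: l') Bs d c lam = Fval l' Bs (dt t) (ct t) nu).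
    { intros lam t nu Ha Hx. unfold Fval. f_equal. apply map_ext. intros b.
      unfold Fsum, dt, ct. simpl. rewrite Ha.
      rewrite (Rsum_ext l' (fun x => lam x * c b x) (fun x => nu x * ((1 - t) * c b x))).
      - ring.
      - intros x Hx'. rewrite Hx by auto. ring. }
    set (K := Rsum_list (map (fun b => Rabs (c b a) + Rsum_list (map (fun x => Rabs (c b x)) l')) Bs)).
    assert (HK0 : 0 <= K).
    { apply Rsum_nonneg. intros b _. assert (0 <= Rabs (c b a)) by apply Rabs_pos.
      assert (0 <= Rsum_list (map (fun x => Rabs (c b x)) l')) by (apply Rsum_nonneg; intros; apply Rabs_pos). lra. }
    assert (Gl : forall nu t s, dom l' nu ->
       Fval l' Bs (dt t) (ct t) nu <= Fval l' Bs (dt s) (ct s) nu + K * Rabs (t - s)).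
    { intros nu t s Hnu. unfold Fval. apply Rmin_list_lip; auto.
      intros b Hb. unfold dt, ct, Fsum.
      replace (fun x : A => nu x * ((1 - t) * c b x)) with (fun x => (1 - t) * (nu x * c b x))
        by (apply functional_extensionality; intros; ring).
      replace (fun x : A => nu x * ((1 - s) * c b x)) with (fun x => (1 - s) * (nu x * c b x))
        by (apply functional_extensionality; intros; ring).
      rewrite !(Rsum_scale l' (fun x => nu x * c b x)).
      set (S := Rsum_list (map (fun x => nu x * c b x) l')).
      replace (d b + t * c b a + (1 - t) * S - (d b + s * c b a + (1 - s) * S))
        with ((t - s) * (c b a - S)) by ring.
      rewrite Rabs_mult. rewrite Rmult_comm. apply Rmult_le_compat_r; [apply Rabs_pos|].
      eapply Rle_trans; [apply Rabs_triang|]. rewrite Rabs_Ropp.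
      assert (Rabs S <= Rsum_list (map (fun x => Rabs (c b x)) l')).
      { apply Rabs_Rsum_le. intros x Hx. eapply dom_le1; eauto. }
      eapply Rle_trans; [|apply (In_le_Rsum Bs (fun b => Rabs (c b a) + Rsum_list (map (fun x => Rabs (c b x)) l')) b)]; auto.
      - lra.
      - intros y _. assert (0 <= Rabs (c y a)) by apply Rabs_pos.
        assert (0 <= Rsum_list (map (fun x => Rabs (c y x)) l')) by (apply Rsum_nonneg; intros; apply Rabs_pos). lra. }
    assert (Hlip : forall t s, Rabs (h t - h s) <= K * Rabs (t - s)).
    { intros t s. unfold h.
      destruct (Hmu t) as [Ht Ht']. destruct (Hmu s) as [Hs Hs'].
      assert (A1 := Gl (mu t) t s Ht). assert (A2 := Gl (mu s) s t Hs).
      assert (A3 := Ht' (mu s) Hs). assert (A4 := Hs' (mu t) Ht).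
      rewrite Rabs_minus_sym with (x := s) in A2.
      set (KK := K * Rabs (t - s)) in *. clearbody KK.

      apply Rabs_le; lra. }
    destruct (continuity_ab_maj h 0 1 ltac:(lra) (fun x _ => lip_cont h K HK0 Hlip x)) as [ts [Hmax Hts]].
    exists (fun x => if eqA x a then ts else (1 - ts) * mu ts x).
    assert (Hout : forall x, In x l' -> (if eqA x a then ts else (1 - ts) * mu ts x) = (1 - ts) * mu ts x).
    { intros x Hx. destruct (eqA x a); [subst; contradiction|auto]. }
    destruct (Hmu ts) as [[Hm1 Hm2] _].
    split.
    + split.
      * intros x [Hax|Hx].
        -- subst x. destruct (eqA a a); [lra|congruence].
        -- rewrite Hout by auto. apply Rmult_le_pos; [lra|auto].
      * simpl. destruct (eqA a a); [|congruence].
        rewrite (Rsum_ext l' _ (fun x => (1 - ts) * mu ts x) Hout).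
        rewrite Rsum_scale, Hm2. ring.
    + intros lam [Hl1 Hl2].
      assert (Hats : (fun x => if eqA x a then ts else (1 - ts) * mu ts x) a = ts).
      { cbv beta. destruct (eqA a a); congruence. }
      rewrite (Key _ ts (mu ts) Hats Hout).
      fold (h ts).
      set (t := lam a).
      assert (Ht0 : 0 <= t) by (apply Hl1; left; auto).
      assert (Hsum : t + Rsum_list (map lam l') = 1) by (simpl in Hl2; exact Hl2).
      assert (0 <= Rsum_list (map lam l')) by (apply Rsum_nonneg; intros; apply Hl1; right; auto).
      destruct (Req_dec t 1) as [Ht1|Ht1].
      * rewrite (Key _ t (mu t)); auto.
        -- fold (h t). apply Hmax. lra.
        -- intros x Hx. rewrite Ht1. replace (1 - 1) with 0 by ring. rewrite Rmult_0_l.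
           apply (Rsum_zero_each l' lam); auto. intros; apply Hl1; right; auto. lra.
      * set (nu := fun x => lam x / (1 - t)).
        assert (Hnu : dom l' nu).
        { split.
          - intros x Hx. unfold nu. apply Rmult_le_pos; [apply Hl1; right; auto|apply Rlt_le, Rinv_0_lt_compat; lra].
          - unfold nu. unfold Rdiv.
            rewrite (Rsum_ext l' _ (fun x => / (1 - t) * lam x)) by (intros; ring).
            rewrite Rsum_scale. replace (Rsum_list (map lam l')) with (1 - t) by lra.
            field. lra. }
        rewrite (Key _ t nu); auto.
        -- apply Rle_trans with (h t). { apply (proj2 (Hmu t)); auto. } apply Hmax. lra.
        -- intros x Hx. unfold nu. field. lra.
Qed.


Lemma all_subsets_len n S : In S (all_subsets n) -> length S = n.
Proof.
  revert S; induction n; simpl; intros S H.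
  - destruct H as [<-|[]]; reflexivity.
  - apply in_app_or in H. destruct H as [H|H]; apply in_map_iff in H;
      destruct H as [S' [<- H]]; simpl; f_equal; auto.
Qed.

Lemma all_subsets_in n S : length S = n -> In S (all_subsets n).
Proof.
  revert S; induction n; simpl; intros S H.
  - destruct S; [left; auto|discriminate].
  - destruct S as [|b S]; [discriminate|]. simpl in H. injection H as H.
    apply in_or_app. destruct b; [left|right]; apply in_map; auto.
Qed.

Lemma NoDup_map_cons (b : bool) (l : list (list bool)) : NoDup l -> NoDup (map (cons b) l).
Proof.
  induction 1; simpl; constructor; auto.
  intros Hin. apply in_map_iff in Hin. destruct Hin as [y [Hy Hy2]]. injection Hy as ->. auto.
Qed.

Lemma all_subsets_NoDup n : NoDup (all_subsets n).
Proof.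
  induction n; simpl.
  - constructor; [simpl; tauto|constructor].
  - apply NoDup_app; try apply NoDup_map_cons; auto.
    intros a H1 H2. apply in_map_iff in H1, H2.
    destruct H1 as [x [<- _]]. destruct H2 as [y [Hy _]]. discriminate.
Qed.

Lemma all_subsets_ne n : all_subsets n <> [].
Proof. intros H. assert (Hin := all_subsets_in n (repeat false n) (repeat_length _ _)).
  rewrite H in Hin. destruct Hin. Qed.

Lemma msa_nonneg sel f j : 0 <= max_sel_aux sel f j.
Proof. revert j; induction sel as [|b sel IH]; intros j; simpl; [lra|].
  destruct b; [eapply Rle_trans; [apply IH|apply Rmax_r]|apply IH]. Qed.

Lemma msa_ge sel f j p : nth p sel false = true -> f (j + p)%nat <= max_sel_aux sel f j.
Proof.
  revert j p; induction sel as [|b sel IH]; intros j p H; simpl.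
  - destruct p; discriminate.
  - destruct p as [|p]; simpl in H.
    + subst b. rewrite Nat.add_0_r. apply Rmax_l.
    + replace (j + S p)%nat with (S j + p)%nat by lia.
      destruct b; [eapply Rle_trans; [apply IH; auto|apply Rmax_r]|apply IH; auto].
Qed.

Lemma ms_ge sel f j : (1 <= j)%nat -> nth (j - 1) sel false = true -> f j <= max_sel sel f.
Proof. intros Hj H. unfold max_sel. replace j with (1 + (j - 1))%nat at 1 by lia. apply msa_ge; auto. Qed.

Lemma msa_le sel f j B : 0 <= B -> (forall p, (p < length sel)%nat -> f (j + p)%nat <= B) ->
  max_sel_aux sel f j <= B.
Proof.
  revert j; induction sel as [|b sel IH]; intros j HB H; simpl; [lra|].
  assert (Hr : max_sel_aux sel f (S j) <= B).
  { apply IH; auto. intros p Hp. replace (S j + p)%nat with (j + S p)%nat by lia. apply H; simpl; lia. }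
  destruct b; auto. apply Rmax_lub; auto. replace j with (j + 0)%nat at 1 by lia. apply H; simpl; lia.
Qed.

Lemma msa_zero sel f j : (forall p, nth p sel false = false) -> max_sel_aux sel f j = 0.
Proof.
  revert j; induction sel as [|b sel IH]; intros j H; simpl; auto.
  assert (b = false) by exact (H 0%nat). subst b. apply IH. intros p. exact (H (S p)).
Qed.

Lemma nth_sel_and a b p : nth p (sel_and a b) false = nth p a false && nth p b false.
Proof.
  unfold sel_and. revert b p; induction a as [|x a IH]; intros b p; simpl.
  - destruct p; reflexivity.
  - destruct b as [|y b]; simpl.
    + destruct p; simpl; [destruct x; reflexivity|]. destruct (nth p a false); reflexivity.
    + destruct p; simpl; auto.
Qed.

Lemma nth_sel_compl a p : (p < length a)%nat -> nth p (sel_compl a) false = negb (nth p a false).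
Proof.
  unfold sel_compl. revert p; induction a as [|x a IH]; intros p Hp; simpl in *; [lia|].
  destruct p; auto. apply IH; lia.
Qed.

Lemma length_sel_and a b : length (sel_and a b) = Nat.min (length a) (length b).
Proof. unfold sel_and. rewrite length_map, length_combine. reflexivity. Qed.

Lemma length_sel_compl a : length (sel_compl a) = length a.
Proof. unfold sel_compl. apply length_map. Qed.

Definition sel_of (n : nat) (P : nat -> bool) : list bool := map (fun p => P (S p)) (seq 0 n).

Lemma length_sel_of n P : length (sel_of n P) = n.
Proof. unfold sel_of. rewrite length_map, length_seq. reflexivity. Qed.

Lemma nth_sel_of n P p : (p < n)%nat -> nth p (sel_of n P) false = P (S p).
Proof.
  intros Hp. unfold sel_of.
  rewrite (nth_indep _ false (P 1%nat)) by (rewrite length_map, length_seq; lia).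
  rewrite (map_nth (fun p => P (S p)) (seq 0 n) 0%nat p). rewrite seq_nth by lia. reflexivity.
Qed.

Lemma bitL n P Om j : length Om = n -> (1 <= j <= n)%nat ->
  nth (j - 1) (sel_and (sel_compl (sel_of n P)) (sel_compl Om)) false
  = negb (P j) && negb (nth (j - 1) Om false).
Proof.
  intros Hl Hj. rewrite nth_sel_and, !nth_sel_compl; try rewrite ?length_sel_of; try lia.
  rewrite nth_sel_of by lia. replace (S (j - 1)) with j by lia. reflexivity.
Qed.

Lemma bitR n P Om j : length Om = n -> (1 <= j <= n)%nat ->
  nth (j - 1) (sel_and (sel_of n P) Om) false = P j && nth (j - 1) Om false.
Proof.
  intros Hl Hj. rewrite nth_sel_and, nth_sel_of by lia. replace (S (j - 1)) with j by lia. reflexivity.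
Qed.


Definition aa (k : nat) (i : nat) := sin (INR i * theta_of k).
Definition Lp (k : nat) (i : nat) := (aa k i + aa k (S i)) / aa k (S i).
Definition Rp (k : nat) (i : nat) := (aa k i + aa k (S i)) / aa k i.
Definition Tg (k : nat) := 2 + 2 * cos (theta_of k).

Lemma D_pos (k : nat) (hk : (1 <= k)%nat) : 0 < INR (2 * k + 3).
Proof. apply lt_0_INR; lia. Qed.

Lemma ang_bounds (k : nat) (hk : (1 <= k)%nat) m : (m <= k + 1)%nat -> 0 <= INR m * theta_of k < PI.
Proof.
  intros Hm. unfold theta_of. assert (HD := D_pos k hk). assert (HP := PI_RGT_0).
  assert (H : INR (2 * m) < INR (2 * k + 3)) by (apply lt_INR; lia).
  rewrite mult_INR in H. replace (INR 2) with 2 in H by (simpl; ring).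
  assert (0 <= INR m) by apply pos_INR.
  replace (INR m * (2 * PI / INR (2 * k + 3))) with (PI * (2 * INR m / INR (2 * k + 3))) by (field; lra).
  split.
  - apply Rmult_le_pos; [lra|]. apply Rmult_le_pos; [lra|]. apply Rlt_le, Rinv_0_lt_compat; lra.
  - assert (2 * INR m / INR (2 * k + 3) < 1).
    { apply (Rmult_lt_reg_r (INR (2 * k + 3))); auto. field_simplify; lra. }
    assert (0 <= 2 * INR m / INR (2 * k + 3)).
    { apply Rmult_le_pos; [lra|]. apply Rlt_le, Rinv_0_lt_compat; lra. }
    nra.
Qed.

Lemma aa_pos (k : nat) (hk : (1 <= k)%nat) i : (1 <= i <= k + 1)%nat -> 0 < aa k i.
Proof.
  intros Hi. unfold aa. destruct (ang_bounds k hk i ltac:(lia)) as [H1 H2]. apply sin_gt_0; auto.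
  assert (0 < INR i) by (apply lt_0_INR; lia).
  assert (0 < theta_of k) by (unfold theta_of; assert (HD := D_pos k hk); assert (HP := PI_RGT_0);
    apply Rdiv_lt_0_compat; lra).
  nra.
Qed.

Lemma aa0 (k : nat) (hk : (1 <= k)%nat) : aa k 0 = 0.
Proof. unfold aa. simpl. rewrite Rmult_0_l. apply sin_0. Qed.

Lemma aa_rec (k : nat) (hk : (1 <= k)%nat) m : aa k m + aa k (S (S m)) = 2 * cos (theta_of k) * aa k (S m).
Proof.
  unfold aa. rewrite !S_INR.
  replace ((INR m + 1 + 1) * theta_of k) with ((INR m + 1) * theta_of k + theta_of k) by ring.
  replace (INR m * theta_of k) with ((INR m + 1) * theta_of k - theta_of k) by ring.
  rewrite sin_plus, sin_minus. ring.
Qed.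

Lemma aa_end (k : nat) (hk : (1 <= k)%nat) : aa k (k + 2) = - aa k (k + 1).
Proof.
  unfold aa.
  replace (INR (k + 2) * theta_of k) with (2 * PI - INR (k + 1) * theta_of k).
  - rewrite sin_minus, sin_2PI, cos_2PI. ring.
  - unfold theta_of. assert (HD := D_pos k hk).
    assert (INR (k + 2) + INR (k + 1) = INR (2 * k + 3)) by (rewrite <- plus_INR; f_equal; lia).
    replace (INR (k+2)) with (INR (2 * k + 3) - INR (k + 1)) by lra.
    field; lra.
Qed.

Lemma Lp0 (k : nat) (hk : (1 <= k)%nat) : Lp k 0 = 1.
Proof. unfold Lp. rewrite (aa0 k hk). assert (0 < aa k 1) by (apply (aa_pos k hk); lia). field; lra. Qed.

Lemma Lpk (k : nat) (hk : (1 <= k)%nat) : Lp k k = Tg k.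
Proof.
  unfold Lp, Tg. assert (h1 := aa_rec k hk k). assert (h2 := aa_end k hk).
  replace (S (S k)) with (k + 2)%nat in h1 by lia. replace (S k) with (k + 1)%nat by lia.
  replace (S k) with (k + 1)%nat in h1 by lia.
  assert (0 < aa k (k + 1)) by (apply (aa_pos k hk); lia).
  apply (Rmult_eq_reg_r (aa k (k + 1))); [|lra]. field_simplify; [|lra]. nra.
Qed.

Lemma Lp_Rp (k : nat) (hk : (1 <= k)%nat) m : (m + 1 <= k)%nat -> Lp k m + Rp k (S m) = Tg k.
Proof.
  intros Hm. unfold Lp, Rp, Tg. assert (h1 := aa_rec k hk m).
  assert (0 < aa k (S m)) by (apply (aa_pos k hk); lia).
  apply (Rmult_eq_reg_r (aa k (S m))); [|lra]. field_simplify; [|lra]. nra.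
Qed.

Lemma C1_pair (k : nat) (hk : (1 <= k)%nat) i : (1 <= i <= k)%nat -> C1_link (Lp k i) (Rp k i) = 1.
Proof.
  intros Hi. unfold C1_link, Lp, Rp.
  assert (0 < aa k i) by (apply (aa_pos k hk); lia). assert (0 < aa k (S i)) by (apply (aa_pos k hk); lia).
  field. repeat split; try lra.
  nra.
Qed.

Lemma Lp_le_k (k : nat) (hk : (1 <= k)%nat) i : (i <= k)%nat -> Lp k i <= Tg k.
Proof.
  intros Hi. rewrite <- (Lpk k hk). unfold Lp.
  assert (0 < aa k (S i)) by (apply (aa_pos k hk); lia). assert (0 < aa k (S k)) by (apply (aa_pos k hk); lia).
  assert (Hkey : aa k i * aa k (S k) <= aa k k * aa k (S i)).
  { unfold aa. rewrite !S_INR.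
    set (x := INR i * theta_of k). set (y := INR k * theta_of k).
    replace ((INR i + 1) * theta_of k) with (x + theta_of k) by (unfold x; ring).
    replace ((INR k + 1) * theta_of k) with (y + theta_of k) by (unfold y; ring).
    rewrite !sin_plus.
    assert (Hs : 0 <= sin (theta_of k)).
    { destruct (ang_bounds k hk 1 ltac:(lia)) as [h1 h2]. simpl in h1, h2.
      rewrite Rmult_1_l in h1, h2. apply sin_ge_0; lra. }
    assert (Hd : 0 <= sin (y - x)).
    { unfold x, y. rewrite <- Rmult_minus_distr_r, <- minus_INR by lia.
      destruct (ang_bounds k hk (k - i) ltac:(lia)). apply sin_ge_0; lra. }
    rewrite sin_minus in Hd. nra. }
  assert (aa k i / aa k (S i) <= aa k k / aa k (S k)).
  { apply (Rmult_le_reg_r (aa k (S i) * aa k (S k))); [nra|].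
    field_simplify; [|lra|lra]. nra. }
  replace ((aa k i + aa k (S i)) / aa k (S i)) with (1 + aa k i / aa k (S i)) by (field; lra).
  replace ((aa k k + aa k (S k)) / aa k (S k)) with (1 + aa k k / aa k (S k)) by (field; lra). lra.
Qed.

Lemma Tg_gt1 (k : nat) (hk : (1 <= k)%nat) : 1 < Tg k.
Proof.
  rewrite <- (Lpk k hk). unfold Lp. assert (0 < aa k k) by (apply (aa_pos k hk); lia).
  assert (0 < aa k (S k)) by (apply (aa_pos k hk); lia).
  replace ((aa k k + aa k (S k)) / aa k (S k)) with (1 + aa k k / aa k (S k)) by (field; lra).
  assert (0 < aa k k / aa k (S k)) by (apply Rdiv_lt_0_compat; lra). lra.
Qed.

Lemma ellL_eq (k : nat) (hk : (1 <= k)%nat) L j : j <> 1%nat -> ellL k L j = Lp k (Nat.div2 j).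
Proof.
  intros Hj. unfold ellL, Lp, aa. rewrite S_INR.
  destruct j as [|[|j]]; [reflexivity|congruence|reflexivity].
Qed.

Lemma rL_eq (k : nat) (hk : (1 <= k)%nat) L j : j <> 1%nat -> rL k L j = Rp k (Nat.div2 j).
Proof.
  intros Hj. unfold rL, Rp, aa. rewrite S_INR.
  destruct j as [|[|j]]; [reflexivity|congruence|reflexivity].
Qed.



Lemma ev2 i : Nat.even (2 * i) = true.
Proof. induction i; auto. replace (2 * S i)%nat with (S (S (2 * i))) by lia. exact IHi. Qed.
Lemma ev2s i : Nat.even (S (2 * i)) = false.
Proof. induction i; auto. replace (S (2 * S i))%nat with (S (S (S (2 * i)))) by lia. exact IHi. Qed.

Lemma div2_bounds j k : (j <= 2 * k + 1)%nat -> (Nat.div2 j <= k)%nat.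
Proof. intros H. assert (h := Nat.div2_odd j). destruct (Nat.odd j); simpl in h; lia. Qed.
Lemma div2_pos j : (2 <= j)%nat -> (1 <= Nat.div2 j)%nat.
Proof. intros H. assert (h := Nat.div2_odd j). destruct (Nat.odd j); simpl in h; lia. Qed.

Definition eqL := list_eq_dec bool_dec.

Lemma Rsum_ind (l : list (list bool)) A (g : list bool -> R) :
  NoDup l -> In A l -> Rsum_list (map (fun S => if eqL S A then g S else 0) l) = g A.
Proof.
  induction l as [|a l IH]; intros Hnd Hin; [destruct Hin|].
  apply NoDup_cons_iff in Hnd. destruct Hnd as [Hna Hnd]. simpl.
  destruct (eqL a A) as [<-|Hne].
  - rewrite (Rsum_ext l _ (fun _ => 0 * 0)).
    + rewrite (Rsum_scale l (fun _ => 0) 0). ring.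
    + intros x Hx. destruct (eqL x a); [subst; contradiction|ring].
  - destruct Hin as [->|Hin]; [congruence|]. rewrite IH; auto. ring.
Qed.

Lemma half k (hk : (1 <= k)%nat) (Q : nat -> bool) ML MR :
  Lp k 0 <= ML -> (forall i, (1 <= i <= k)%nat -> Q i = false -> Lp k i <= ML) ->
  (forall i, (1 <= i <= k)%nat -> Q i = true -> Rp k i <= MR) -> 0 <= MR -> Tg k <= ML + MR.
Proof.
  intros H0 HL HR HM.
  assert (Hmin : forall m, (forall i, (1 <= i <= m)%nat -> Q i = false) \/
     exists v, (1 <= v <= m)%nat /\ Q v = true /\ forall i, (1 <= i < v)%nat -> Q i = false).
  { induction m.
    - left; intros; lia.
    - destruct IHm as [IH|IH].
      + destruct (Q (S m)) eqn:E.
        * right. exists (S m). split; [lia|]. split; auto. intros i Hi. apply IH; lia.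
        * left. intros i Hi. destruct (Nat.eq_dec i (S m)); [subst; auto|]. apply IH; lia.
      + right. destruct IH as [v [Hv1 Hv2]]. exists v; split; [lia|auto]. }
  destruct (Hmin k) as [Hn|[v [Hv [Qv Hb]]]].
  - rewrite <- (Lpk k hk). assert (Lp k k <= ML) by (apply HL; [lia|apply Hn; lia]). lra.
  - destruct v as [|m]; [lia|].
    rewrite <- (Lp_Rp k hk m) by lia.
    assert (Rp k (S m) <= MR) by (apply HR; auto).
    assert (Lp k m <= ML).
    { destruct m; auto. apply HL; [lia|]. apply Hb; lia. }
    lra.
Qed.


Definition br (k : nat) (L : R) (S Om : list bool) :=
  max_sel (sel_and (sel_compl S) (sel_compl Om)) (ellL k L) + max_sel (sel_and S Om) (rL k L).

Lemma br_nonneg (k : nat) (hk : (1 <= k)%nat) (L : R) (HL : 0 < L) S Om : 0 <= br k L S Om.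
Proof. unfold br, max_sel. assert (h1 := msa_nonneg (sel_and (sel_compl S) (sel_compl Om)) (ellL k L) 1).
  assert (h2 := msa_nonneg (sel_and S Om) (rL k L) 1). lra. Qed.

Lemma cut_br (k : nat) (hk : (1 <= k)%nat) (L : R) (HL : 0 < L) lam Om : cut_value (2 * k + 1)%nat (ellL k L) (rL k L) lam Om = Rsum_list (map (fun S => lam S * br k L S Om) (all_subsets (2 * k + 1)%nat)).
Proof. reflexivity. Qed.

Lemma ell_le (k : nat) (hk : (1 <= k)%nat) (L : R) (HL : 0 < L) j : (1 <= j <= (2 * k + 1)%nat)%nat -> (ellL k L) j <= Tg k.
Proof.
  intros Hj. destruct (Nat.eq_dec j 1) as [->|Hne].
  - simpl. assert (h := Tg_gt1 k hk). lra.
  - rewrite ellL_eq by auto. apply Lp_le_k; auto. apply div2_bounds. lia.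
Qed.

Lemma upper (k : nat) (hk : (1 <= k)%nat) (L : R) (HL : 0 < L) lam : schedule (2 * k + 1)%nat lam -> sched_value (2 * k + 1)%nat (ellL k L) (rL k L) lam <= Tg k.
Proof.
  intros [H1 H2]. unfold sched_value.
  eapply Rle_trans.
  { apply Rmin_list_le. apply in_map. apply (all_subsets_in (2 * k + 1)%nat (repeat false (2 * k + 1)%nat)). apply repeat_length. }
  rewrite (cut_br k hk L HL).
  apply Rle_trans with (Rsum_list (map (fun S => Tg k * lam S) (all_subsets (2 * k + 1)%nat))).
  - apply Rsum_le. intros S HS. rewrite Rmult_comm. apply Rmult_le_compat_r; auto.
    unfold br. unfold max_sel at 2. rewrite msa_zero.
    + rewrite Rplus_0_r. unfold max_sel. apply msa_le; [assert (h := Tg_gt1 k hk); lra|].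
      intros p Hp. rewrite length_sel_and, length_sel_compl, length_sel_compl in Hp.
      apply all_subsets_len in HS. apply (ell_le k hk L HL). lia.
    + intros p. rewrite nth_sel_and. rewrite nth_repeat. apply andb_false_r.
  - rewrite Rsum_scale, H2. lra.
Qed.

Definition S0 (k : nat) := sel_of (2 * k + 1)%nat (fun j => Nat.eqb j 1).
Definition S1 (k : nat) := sel_of (2 * k + 1)%nat Nat.even.
Definition S2 (k : nat) := sel_of (2 * k + 1)%nat (fun j => negb (Nat.even j) && negb (Nat.eqb j 1)).
Definition lamE (k : nat) (e : R) (S : list bool) :=
  (if eqL S (S0 k) then e else 0) + (if eqL S (S1 k) then (1 - e) / 2 else 0)
  + (if eqL S (S2 k) then (1 - e) / 2 else 0).

Lemma S_in (k : nat) (hk : (1 <= k)%nat) (L : R) (HL : 0 < L) P : In (sel_of (2 * k + 1)%nat P) (all_subsets (2 * k + 1)%nat).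
Proof. apply all_subsets_in, length_sel_of. Qed.

Lemma lamE_sum (k : nat) (hk : (1 <= k)%nat) (L : R) (HL : 0 < L) e g : Rsum_list (map (fun S => lamE k e S * g S) (all_subsets (2 * k + 1)%nat)) =
   e * g (S0 k) + (1 - e) / 2 * g (S1 k) + (1 - e) / 2 * g (S2 k).
Proof.
  rewrite (Rsum_ext _ _ (fun S => ((if eqL S (S0 k) then e * g S else 0) + (if eqL S (S1 k) then (1 - e) / 2 * g S else 0))
          + (if eqL S (S2 k) then (1 - e) / 2 * g S else 0))).
  - rewrite !Rsum_plus. rewrite !Rsum_ind; auto using all_subsets_NoDup; try reflexivity. all: apply (S_in k hk L HL).
  - intros S _. unfold lamE. destruct (eqL S (S0 k)), (eqL S (S1 k)), (eqL S (S2 k)); ring.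
Qed.

Lemma lamE_sched (k : nat) (hk : (1 <= k)%nat) (L : R) (HL : 0 < L) e : 0 <= e <= 1 -> schedule (2 * k + 1)%nat (lamE k e).
Proof.
  intros He. split.
  - intros S _. unfold lamE. destruct (eqL S (S0 k)), (eqL S (S1 k)), (eqL S (S2 k)); lra.
  - rewrite (Rsum_ext _ _ (fun S => lamE k e S * 1)) by (intros; ring).
    rewrite (lamE_sum k hk L HL). lra.
Qed.

Lemma two_states (k : nat) (hk : (1 <= k)%nat) (L : R) (HL : 0 < L) Om : length Om = (2 * k + 1)%nat -> nth 0 Om false = false -> 2 * Tg k <= br k L (S1 k) Om + br k L (S2 k) Om.
Proof.
  intros Hl Hw.
  assert (A1 : Tg k <= max_sel (sel_and (sel_compl (S1 k)) (sel_compl Om)) (ellL k L) + max_sel (sel_and (S2 k) Om) (rL k L)).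
  { apply half with (Q := fun i => nth (2 * i) Om false); auto.
    - rewrite (Lp0 k hk). apply (ms_ge _ (ellL k L) 1); [lia|]. unfold S1. rewrite bitL by first [assumption | lia].
      simpl. rewrite Hw. reflexivity.
    - intros i Hi HQ. replace (Lp k i) with ((ellL k L) (S (2 * i))).
      + apply ms_ge; [lia|]. unfold S1. rewrite bitL by first [assumption | lia].
        replace (S (2 * i) - 1)%nat with (2 * i)%nat by lia. rewrite HQ, ev2s. reflexivity.
      + rewrite ellL_eq by lia. rewrite Nat.div2_succ_double. reflexivity.
    - intros i Hi HQ. replace (Rp k i) with ((rL k L) (S (2 * i))).
      + apply ms_ge; [lia|]. unfold S2. rewrite bitR by first [assumption | lia].
        replace (S (2 * i) - 1)%nat with (2 * i)%nat by lia. rewrite HQ, ev2s.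
        destruct i; [lia|]. reflexivity.
      + rewrite rL_eq by lia. rewrite Nat.div2_succ_double. reflexivity.
    - apply msa_nonneg. }
  assert (A2 : Tg k <= max_sel (sel_and (sel_compl (S2 k)) (sel_compl Om)) (ellL k L) + max_sel (sel_and (S1 k) Om) (rL k L)).
  { apply half with (Q := fun i => nth (2 * i - 1) Om false); auto.
    - rewrite (Lp0 k hk). apply (ms_ge _ (ellL k L) 1); [lia|]. unfold S2. rewrite bitL by first [assumption | lia].
      simpl. rewrite Hw. reflexivity.
    - intros i Hi HQ. replace (Lp k i) with ((ellL k L) (2 * i)%nat).
      + apply ms_ge; [lia|]. unfold S2. rewrite bitL by first [assumption | lia].
        rewrite HQ, ev2. reflexivity.
      + rewrite ellL_eq by lia. rewrite Nat.div2_double. reflexivity.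
    - intros i Hi HQ. replace (Rp k i) with ((rL k L) (2 * i)%nat).
      + apply ms_ge; [lia|]. unfold S1. rewrite bitR by first [assumption | lia].
        rewrite HQ, ev2. reflexivity.
      + rewrite rL_eq by lia. rewrite Nat.div2_double. reflexivity.
    - apply msa_nonneg. }
  unfold br. lra.
Qed.

Lemma lower (k : nat) (hk : (1 <= k)%nat) (L : R) (HL : 0 < L) e : 0 <= e <= 1 -> Rmin (e * L) ((1 - e) * Tg k) <= sched_value (2 * k + 1)%nat (ellL k L) (rL k L) (lamE k e).
Proof.
  intros He. unfold sched_value. apply Rmin_list_ge.
  { intros H. apply map_eq_nil in H. revert H. apply all_subsets_ne. }
  intros x Hx. apply in_map_iff in Hx. destruct Hx as [Om [<- HOm]].
  apply all_subsets_len in HOm.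
  rewrite (cut_br k hk L HL), (lamE_sum k hk L HL).
  assert (h0 := (br_nonneg k hk L HL) (S0 k) Om). assert (h1 := (br_nonneg k hk L HL) (S1 k) Om). assert (h2 := (br_nonneg k hk L HL) (S2 k) Om).
  destruct (nth 0 Om false) eqn:Hw.
  - apply Rle_trans with (e * L); [apply Rmin_l|].
    assert (L <= br k L (S0 k) Om).
    { unfold br. assert (Hr1 : rL k L 1%nat = L) by reflexivity.
      assert (Hq : (rL k L) 1%nat <= max_sel (sel_and (S0 k) Om) (rL k L)).
      { apply ms_ge; [lia|]. unfold S0. rewrite bitR by first [assumption | lia]. simpl. auto. }
      rewrite Hr1 in Hq.
      assert (h := msa_nonneg (sel_and (sel_compl (S0 k)) (sel_compl Om)) (ellL k L) 1). unfold max_sel in *. lra. }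
    assert (e * L <= e * br k L (S0 k) Om) by (apply Rmult_le_compat_l; lra).
    assert (0 <= (1 - e) / 2 * br k L (S1 k) Om) by (apply Rmult_le_pos; lra).
    assert (0 <= (1 - e) / 2 * br k L (S2 k) Om) by (apply Rmult_le_pos; lra).
    lra.
  - apply Rle_trans with ((1 - e) * Tg k); [apply Rmin_r|].
    assert (h := (two_states k hk L HL) Om HOm Hw).
    assert (0 <= e * br k L (S0 k) Om) by (apply Rmult_le_pos; lra).
    assert ((1 - e) * Tg k <= (1 - e) / 2 * (br k L (S1 k) Om + br k L (S2 k) Om)).
    { replace ((1 - e) * Tg k) with ((1 - e) / 2 * (2 * Tg k)) by field.
      apply Rmult_le_compat_l; lra. }
    lra.
Qed.

Lemma exists_Cn (k : nat) (hk : (1 <= k)%nat) (L : R) (HL : 0 < L) : exists c, is_Cn (2 * k + 1)%nat (ellL k L) (rL k L) c.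
Proof.
  destruct (opt_exists eqL (all_subsets (2 * k + 1)%nat) (all_subsets_ne (2 * k + 1)%nat) (all_subsets_NoDup (2 * k + 1)%nat)
              (all_subsets (2 * k + 1)%nat) (fun _ => 0) (fun Om S => br k L S Om) (all_subsets_ne (2 * k + 1)%nat)) as [lst [Hd Hopt]].
  assert (Eq : forall lam, Fval (all_subsets (2 * k + 1)%nat) (all_subsets (2 * k + 1)%nat) (fun _ => 0) (fun Om S => br k L S Om) lam
                     = sched_value (2 * k + 1)%nat (ellL k L) (rL k L) lam).
  { intros lam. unfold Fval, sched_value. f_equal. apply map_ext. intros Om.
    rewrite Rplus_0_l. reflexivity. }
  exists (sched_value (2 * k + 1)%nat (ellL k L) (rL k L) lst). split.
  - exists lst. split; auto.
  - intros lam Hlam. rewrite <- !Eq. apply Hopt. exact Hlam.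
Qed.

Lemma Cn_bounds (k : nat) (hk : (1 <= k)%nat) (L : R) (HL : 0 < L) c e : is_Cn (2 * k + 1)%nat (ellL k L) (rL k L) c -> 0 <= e <= 1 -> Rmin (e * L) ((1 - e) * Tg k) <= c <= Tg k.
Proof.
  intros [[lam [Hs Hv]] Hmax] He. split.
  - eapply Rle_trans; [apply (lower k hk L HL); auto|]. apply Hmax, (lamE_sched k hk L HL); auto.
  - rewrite <- Hv. apply (upper k hk L HL); auto.
Qed.

Lemma C1aux_val (k : nat) (hk : (1 <= k)%nat) (L : R) (HL : 0 < L) m : (2 <= m <= (2 * k + 1)%nat)%nat -> C1_aux m (ellL k L) (rL k L) = 1.
Proof.
  induction m as [|m IH]; intros Hm; [lia|].
  destruct m as [|m]; [lia|].
  change (C1_aux (S (S m)) (ellL k L) (rL k L)) with (Rmax (C1_link ((ellL k L) (S (S m))) ((rL k L) (S (S m)))) (C1_aux (S m) (ellL k L) (rL k L))).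
  assert (Hc : C1_link ((ellL k L) (S (S m))) ((rL k L) (S (S m))) = 1).
  { rewrite ellL_eq, rL_eq by lia. apply C1_pair; auto.
    split; [apply div2_pos; lia|apply div2_bounds; lia]. }
  rewrite Hc. apply Rmax_left.
  destruct m as [|m].
  - simpl. unfold C1_link, ellL, rL. simpl.
    apply (Rmult_le_reg_r (1 + L)); [lra|]. field_simplify; lra.
  - rewrite IH by lia. lra.
Qed.




Lemma limit_part k (hk : (1 <= k)%nat) eps : 0 < eps -> exists M, forall L, 0 < L -> M < L ->
  forall c, is_Cn (2 * k + 1) (ellL k L) (rL k L) c -> Rabs (c - Tg k) < eps.
Proof.
  intros He. assert (hT := Tg_gt1 k hk).
  set (e := eps / (eps + 2 * Tg k)).
  assert (He0 : 0 < e) by (apply Rdiv_lt_0_compat; lra).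
  assert (He1 : e < 1) by (unfold e; apply (Rmult_lt_reg_r (eps + 2 * Tg k)); [lra|]; field_simplify; lra).
  exists (Tg k / e). intros L HL HM c Hc.
  destruct (Cn_bounds k hk L HL c e Hc ltac:(lra)) as [Hlo Hhi].
  assert (Tg k < e * L).
  { apply (Rmult_lt_compat_l e) in HM; auto. replace (e * (Tg k / e)) with (Tg k) in HM by (field; lra). lra. }
  assert (Tg k - eps < (1 - e) * Tg k).
  { unfold e. apply (Rmult_lt_reg_r (eps + 2 * Tg k)); [lra|]. field_simplify; nra. }
  assert (Tg k - eps < c).
  { unfold Rmin in Hlo. destruct Rle_dec; lra. }
  apply Rabs_def1; lra.
Qed.

Lemma ellL_n k (hk : (1 <= k)%nat) L : ellL k L (2 * k + 1) = Tg k.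
Proof.
  rewrite ellL_eq by lia. replace (2 * k + 1)%nat with (S (2 * k)) by lia.
  rewrite Nat.div2_succ_double. apply Lpk; auto.
Qed.

Theorem mainTheorem8 (k : nat) (hk : (1 <= k)%nat) :
  let n := (2 * k + 1)%nat in
  let th := theta_of k in
  (forall L : R, 0 < L -> forall j : nat, (2 <= j)%nat /\ (j <= n)%nat ->
      C1_link (ellL k L j) (rL k L j) = 1) /\
  (forall L : R, 0 < L -> C1net n (ellL k L) (rL k L) = 1) /\
  (forall L : R, 0 < L ->
      (exists c, is_Cn n (ellL k L) (rL k L) c) /\
      (forall c, is_Cn n (ellL k L) (rL k L) c -> c <= ellL k L n) /\
      ellL k L n = 2 + 2 * cos th) /\
  (forall eps : R, 0 < eps -> exists M : R, forall L : R, 0 < L -> M < L ->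
      forall c, is_Cn n (ellL k L) (rL k L) c ->
        Rabs (c - (2 + 2 * cos th)) < eps) /\
  (forall eps : R, 0 < eps -> exists M : R, forall L : R, 0 < L -> M < L ->
      forall c, is_Cn n (ellL k L) (rL k L) c ->
        Rabs (C1net n (ellL k L) (rL k L) / c - 1 / (2 + 2 * cos (2 * PI / INR (n + 2)))) < eps).
Proof.
  intros n th.
  assert (hT := Tg_gt1 k hk).
  assert (HTe : 2 + 2 * cos th = Tg k) by reflexivity.
  split; [|split; [|split; [|split]]].
  - intros L HL j [Hj1 Hj2]. rewrite ellL_eq, rL_eq by lia. apply C1_pair; auto.
    split; [apply div2_pos; lia|apply div2_bounds; unfold n in Hj2; lia].
  - intros L HL. unfold C1net. apply (C1aux_val k hk L HL); auto. unfold n; lia.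
  - intros L HL. split; [|split].
    + apply (exists_Cn k hk L HL).
    + intros c Hc. unfold n. rewrite ellL_n by auto.
      exact (proj2 (Cn_bounds k hk L HL c 0 Hc ltac:(lra))).
    + unfold n. rewrite ellL_n by auto. reflexivity.
  - intros eps He. rewrite HTe. apply limit_part; auto.
  - intros eps He.
    replace (2 * PI / INR (n + 2)) with th.
    2:{ replace (n + 2)%nat with (2 * k + 3)%nat by (unfold n; lia). reflexivity. }
    rewrite HTe.
    set (T := Tg k) in *.
    set (d := Rmin (T / 2) (eps * T * T / 4)).
    assert (Hd0 : 0 < d).
    { unfold d. apply Rmin_glb_lt. 1: lra. apply Rmult_lt_0_compat; [|lra]. apply Rmult_lt_0_compat; [|lra]. nra. }
    destruct (limit_part k hk d Hd0) as [M HM].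
    exists M. intros L HL HML c Hc.
    assert (Hcd := HM L HL HML c Hc).
    unfold C1net. rewrite (C1aux_val k hk L HL) by lia.
    assert (Hd1 : d <= T / 2) by apply Rmin_l.
    assert (Hd2 : d <= eps * T * T / 4) by apply Rmin_r.
    apply Rabs_def2 in Hcd. destruct Hcd as [Hc1 Hc2].
    change (Tg k) with T in Hc1, Hc2.
    assert (Hcpos : T / 2 < c) by lra.
    replace (1 / c - 1 / T) with ((T - c) / (c * T)) by (field; lra).
    assert (0 < c * T) by nra.
    unfold Rdiv. rewrite Rabs_mult, Rabs_inv, (Rabs_right (c * T)) by lra. fold (Rabs (T - c) / (c * T)).
    apply (Rmult_lt_reg_r (c * T)); [lra|].
    unfold Rdiv. rewrite Rmult_assoc, Rinv_l, Rmult_1_r by lra.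
    assert (Rabs (T - c) < d) by (rewrite Rabs_minus_sym; apply Rabs_def1; lra).
    assert (eps * T * T / 4 < eps * (c * T)).
    { assert (T * T / 4 < c * T) by nra. nra. }
    lra.
Qed.
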